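(* Consider the setting and Algorithm DRDGA in the context, under Assumptions A1 and A2, with a positive non-increasing stepsize sequence $\beta[t]\to0$, and let $D$ be a constant with $\sup_t\|\lambda_i[t]\|\le D$ for all $i$. Let $\overline{\theta}[t]=\frac1m\sum_{i=1}^m\theta_i[t]$. Then for every $\lambda\in\mathbb{R}^p$, every $\mathbf{x}\in\mathbf{X}_1\times\cdots\times\mathbf{X}_m$ and every $t>0$, $$\|\overline{\theta}[t+1]-\lambda\|^2\le\|\overline{\theta}[t]-\lambda\|^2+\frac{4\beta[t+1]}{m}\sum_{j=1}^m(G_j+\gamma_jD)\|\lambda_j[t+1]-\overline{\theta}[t]\|-\frac{\beta[t+1]}{m}\sum_{j=1}^m\gamma_j\|\lambda_j[t+1]-\lambda\|^2+\frac{\beta^2[t+1]}{m}\sum_{j=1}^m(G_j+\gamma_jD)^2-\frac{2\beta[t+1]}{m}\big(\mathcal{L}(\mathbf{x}[t+1],\lambda)-\mathcal{L}(\mathbf{x},\overline{\theta}[t])\big),$$ where $\mathbf{x}[t+1]=(\mathbf{x}_1[t+1],\dots,\mathbf{x}_m[t+1])$.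
   Context: Problem: $m$ agents; agent $i$ has $f_i:\mathbb{R}^{n_i}\to\mathbb{R}$, a set $\mathbf{X}_i\subseteq\mathbb{R}^{n_i}$, $A_i\in\mathbb{R}^{p\times n_i}$, $\mathbf{b}_i\in\mathbb{R}^p$; the problem is $\min_{\mathbf{x}_i\in\mathbf{X}_i}\sum_i f_i(\mathbf{x}_i)$ s.t. $\sum_i(A_i\mathbf{x}_i-\mathbf{b}_i)=0$. Regularization parameters $\gamma_i>0$; $\mathcal{L}_i(\mathbf{x}_i,\lambda)=f_i(\mathbf{x}_i)+\lambda^\top(A_i\mathbf{x}_i-\mathbf{b}_i)-\frac{\gamma_i}{2}\lambda^\top\lambda$ and $\mathcal{L}(\mathbf{x},\lambda)=\sum_{i=1}^m\mathcal{L}_i(\mathbf{x}_i,\lambda)$. Assumption A1: each $f_i$ is $\tau_i$-strongly convex ($\tau_i>0$), each $\mathbf{X}_i$ nonempty, convex, compact. $G_i>0$ are constants with $\|A_i\mathbf{x}_i-\mathbf{b}_i\|\le G_i$ for all $\mathbf{x}_i\in\mathbf{X}_i$. Network: directed graphs $\mathcal{G}[t]=(\{1,\dots,m\},\mathcal{E}[t])$; $\mathcal{N}_i^{out}[t]=\{j:(i,j)\in\mathcal{E}[t]\}\cup\{i\}$, $\mathcal{N}_i^{in}[t]=\{j:(j,i)\in\mathcal{E}[t]\}\cup\{i\}$, $d_i[t]=|\mathcal{N}_i^{out}[t]|$; $(W[t])_{ij}=1/d_j[t]$ if $j\in\mathcal{N}_i^{in}[t]$, else $0$. Assumption A2: each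 agent knows $d_i[t]$; there is an integer $B_c>0$ such that for every $k\ge0$ the graph with edge set $\bigcup_{l=kB_c}^{(k+1)B_c-1}\mathcal{E}[l]$ is strongly connected. Algorithm DRDGA: $\theta_i[0]\in\mathbb{R}^p$ given, $\rho_i[0]=1$; for $t\ge0$: $\mathbf{u}_i[t+1]=\sum_j (W[t])_{ij}\theta_j[t]$; $\rho_i[t+1]=\sum_j (W[t])_{ij}\rho_j[t]$; $\lambda_i[t+1]=\mathbf{u}_i[t+1]/\rho_i[t+1]$; $\mathbf{x}_i[t+1]=\arg\min_{\mathbf{x}_i\in\mathbf{X}_i}\mathcal{L}_i(\mathbf{x}_i,\lambda_i[t+1])$; $\theta_i[t+1]=\mathbf{u}_i[t+1]+\beta[t+1](A_i\mathbf{x}_i[t+1]-\mathbf{b}_i-\gamma_i\lambda_i[t+1])$. *)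

(* Defs.v *)
From Stdlib Require Import Reals.
From mathcomp Require Import all_boot.
Set Implicit Arguments. Unset Strict Implicit. Unset Printing Implicit Defensive.
Local Open Scope R_scope.

Definition vec (n : nat) := 'I_n -> R.

Definition vsum (n : nat) (F : 'I_n -> R) : R := \big[Rplus/0]_(k < n) F k.

Definition vadd n (u v : vec n) : vec n := fun k => u k + v k.
Definition vsub n (u v : vec n) : vec n := fun k => u k - v k.
Definition vscale n (a : R) (u : vec n) : vec n := fun k => a * u k.
Definition dot n (u v : vec n) : R := vsum (fun k => u k * v k).
Definition norm n (u : vec n) : R := sqrt (dot u u).

Definition mat (p q : nat) := 'I_p -> 'I_q -> R.
Definition matvec p q (A : mat p q) (x : vec q) : vec p :=
  fun r => vsum (fun k => A r k * x k).

Definition strongly_convex n (f : vec n -> R) (tau : R) : Prop :=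
  forall (x y : vec n) (a : R), 0 <= a <= 1 ->
    f (vadd (vscale a x) (vscale (1 - a) y))
    <= a * f x + (1 - a) * f y - tau / 2 * a * (1 - a) * (norm (vsub x y)) ^ 2.

Definition convex_set n (X : vec n -> Prop) : Prop :=
  forall (x y : vec n) (a : R), X x -> X y -> 0 <= a <= 1 ->
    X (vadd (vscale a x) (vscale (1 - a) y)).

Definition vconv n (xs : nat -> vec n) (y : vec n) : Prop :=
  Un_cv (fun k => norm (vsub (xs k) y)) 0.

(* (sequential) compactness: every sequence in X has a subsequence
   converging to a point of X (equivalent to compactness in R^n) *)
Definition compact_set n (X : vec n -> Prop) : Prop :=
  forall xs : nat -> vec n, (forall k, X (xs k)) ->
    exists (phi : nat -> nat) (y : vec n),
      (forall k, (phi k < phi k.+1)%N) /\ X y /\ vconv (fun k => xs (phi k)) y.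

Definition Lag_i p q (f : vec q -> R) (A : mat p q) (b : vec p) (gamma : R)
    (x : vec q) (lam : vec p) : R :=
  f x + dot (vsub (matvec A x) b) lam - gamma / 2 * dot lam lam.

Definition Lag m p (n : 'I_m -> nat) (f : forall i, vec (n i) -> R)
    (A : forall i, mat p (n i)) (b : 'I_m -> vec p) (gamma : 'I_m -> R)
    (x : forall i, vec (n i)) (lam : vec p) : R :=
  \big[Rplus/0]_(i < m) Lag_i (f i) (A i) (b i) (gamma i) (x i) lam.

(* network: E t i j <-> (i,j) is an edge of G[t] *)
Definition Nout m (E : nat -> 'I_m -> 'I_m -> bool) (t : nat) (i : 'I_m)
  : {set 'I_m} := [set j | E t i j] :|: [set i].
Definition Nin m (E : nat -> 'I_m -> 'I_m -> bool) (t : nat) (i : 'I_m)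
  : {set 'I_m} := [set j | E t j i] :|: [set i].
Definition deg m (E : nat -> 'I_m -> 'I_m -> bool) (t : nat) (i : 'I_m) : nat :=
  #|Nout E t i|.
Definition Wmat m (E : nat -> 'I_m -> 'I_m -> bool) (t : nat) (i j : 'I_m) : R :=
  if j \in Nin E t i then 1 / INR (deg E t j) else 0.

(* Assumption A2 (connectivity part): every window union graph is strongly connected *)
Definition B_strongly_connected m (E : nat -> 'I_m -> 'I_m -> bool) (Bc : nat)
  : Prop :=
  (0 < Bc)%N /\
  forall (k : nat) (a c : 'I_m),
    connect (fun u v => [exists l : 'I_Bc, E (k * Bc + l)%N u v]) a c.

Definition vavg m p (theta : 'I_m -> vec p) : vec p :=
  fun r => / INR m * \big[Rplus/0]_(i < m) theta i r.

(* Main.v *)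
From HB Require Import structures.
Require Import Defs.
From Stdlib Require Import Reals Lra Psatz FunctionalExtensionality.
From mathcomp Require Import all_boot.
Local Open Scope R_scope.
Set Implicit Arguments.
Lemma Rplus_left_id : left_id 0 Rplus. Proof. move=> x; ring. Qed.
Lemma Rplus_assoc' : associative Rplus. Proof. move=> x y z; ring. Qed.
Lemma Rplus_comm' : commutative Rplus. Proof. move=> x y; ring. Qed.
HB.instance Definition _ := Monoid.isComLaw.Build R 0 Rplus Rplus_assoc' Rplus_comm' Rplus_left_id.

Lemma sumRZ (I : Type) (r : seq I) (P : pred I) (F : I -> R) a :
  \big[Rplus/0]_(i <- r | P i) (a * F i) = a * \big[Rplus/0]_(i <- r | P i) F i.
Proof.
apply: (big_rec2 (fun y1 y2 => y1 = a * y2)); first ring.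
by move=> i y1 y2 _ ->; ring.
Qed.

Lemma sumRZr (I : Type) (r : seq I) (P : pred I) (F : I -> R) a :
  \big[Rplus/0]_(i <- r | P i) (F i * a) = (\big[Rplus/0]_(i <- r | P i) F i) * a.
Proof.
apply: (big_rec2 (fun y1 y2 => y1 = y2 * a)); first ring.
by move=> i y1 y2 _ ->; ring.
Qed.

Lemma sumRD (I : Type) (r : seq I) (P : pred I) (F G : I -> R) :
  \big[Rplus/0]_(i <- r | P i) (F i + G i) =
  \big[Rplus/0]_(i <- r | P i) F i + \big[Rplus/0]_(i <- r | P i) G i.
Proof. by rewrite big_split. Qed.

Lemma sumRB (I : Type) (r : seq I) (P : pred I) (F G : I -> R) :
  \big[Rplus/0]_(i <- r | P i) (F i - G i) =
  \big[Rplus/0]_(i <- r | P i) F i - \big[Rplus/0]_(i <- r | P i) G i.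
Proof.
apply: (big_rec3 (fun y1 y2 y3 => y1 = y2 - y3)); first ring.
by move=> i y1 y2 y3 _ ->; ring.
Qed.

Lemma sumR_ge0 (I : Type) (r : seq I) (P : pred I) (F : I -> R) :
  (forall i, P i -> 0 <= F i) -> 0 <= \big[Rplus/0]_(i <- r | P i) F i.
Proof. move=> H; apply: big_ind => //; [lra | move=> *; lra]. Qed.

Lemma sumR_le (I : Type) (r : seq I) (P : pred I) (F G : I -> R) :
  (forall i, P i -> F i <= G i) ->
  \big[Rplus/0]_(i <- r | P i) F i <= \big[Rplus/0]_(i <- r | P i) G i.
Proof. move=> H; apply: (big_ind2 Rle) => //; [lra | move=> *; lra]. Qed.

Lemma iter_const k c : iter k (Rplus c) 0 = INR k * c.
Proof. elim: k => [|k IH]; first (simpl; ring). rewrite iterS IH S_INR; ring. Qed.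
Section X. End X.
Lemma dot_comm n (u v : vec n) : dot u v = dot v u.
Proof. rewrite /dot /vsum; apply: eq_bigr => k _; ring. Qed.

Lemma dot_subl n (u v w : vec n) : dot (vsub u v) w = dot u w - dot v w.
Proof. rewrite /dot /vsum -sumRB; apply: eq_bigr => k _; rewrite /vsub; ring. Qed.
Lemma dot_subr n (u v w : vec n) : dot w (vsub u v) = dot w u - dot w v.
Proof. by rewrite dot_comm dot_subl !(dot_comm w). Qed.
Lemma dot_addl n (u v w : vec n) : dot (vadd u v) w = dot u w + dot v w.
Proof. rewrite /dot /vsum -sumRD; apply: eq_bigr => k _; rewrite /vadd; ring. Qed.
Lemma dot_addr n (u v w : vec n) : dot w (vadd u v) = dot w u + dot w v.
Proof. by rewrite dot_comm dot_addl !(dot_comm w). Qed.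
Lemma dot_scalel n a (u w : vec n) : dot (vscale a u) w = a * dot u w.
Proof. rewrite /dot /vsum -sumRZ; apply: eq_bigr => k _; rewrite /vscale; ring. Qed.
Lemma dot_scaler n a (u w : vec n) : dot w (vscale a u) = a * dot w u.
Proof. by rewrite dot_comm dot_scalel dot_comm. Qed.
Lemma dot_ge0 n (u : vec n) : 0 <= dot u u.
Proof. apply: sumR_ge0 => k _; nra. Qed.
Lemma norm_ge0 n (u : vec n) : 0 <= norm u.
Proof. exact: sqrt_pos. Qed.
Lemma norm_sq n (u : vec n) : norm u ^ 2 = dot u u.
Proof. rewrite /norm pow2_sqrt //; exact: dot_ge0. Qed.

Lemma CS2 n (u v : vec n) : (dot u v) ^ 2 <= dot u u * dot v v.
Proof.
have H : forall s, 0 <= dot u u - 2 * s * dot u v + s ^ 2 * dot v v.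
  move=> s; have := dot_ge0 (vsub u (vscale s v)).
  rewrite !dot_subl !dot_subr !dot_scalel !dot_scaler (dot_comm v u); nra.
have Ha := dot_ge0 v; have Hc := dot_ge0 u.
case: (Rle_lt_or_eq_dec _ _ Ha) => Ha'.
  have := H (dot u v / dot v v).
  have hs : dot u v / dot v v * dot v v = dot u v by field; lra.
  move=> Hs.
  have : 0 <= dot v v * (dot u u - 2 * (dot u v / dot v v) * dot u v + (dot u v / dot v v) ^ 2 * dot v v) by nra.
  have -> : dot v v * (dot u u - 2 * (dot u v / dot v v) * dot u v + (dot u v / dot v v) ^ 2 * dot v v)
     = dot v v * dot u u - dot u v ^ 2 by field; lra.
  nra.
rewrite -Ha'.
case: (Req_dec (dot u v) 0) => Hb; first (rewrite Hb; nra).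
have := H ((dot u u + 1) / (2 * dot u v)).
rewrite -Ha'.
have -> : dot u u - 2 * ((dot u u + 1) / (2 * dot u v)) * dot u v + ((dot u u + 1) / (2 * dot u v)) ^ 2 * 0 = -1 by field.
lra.
Qed.

Lemma CS n (u v : vec n) : Rabs (dot u v) <= norm u * norm v.
Proof.
have h := CS2 u v. rewrite -!norm_sq in h.
have h1 := norm_ge0 u; have h2 := norm_ge0 v.
have h3 := Rabs_pos (dot u v).
have h4 : Rabs (dot u v) ^ 2 = dot u v ^ 2 by rewrite -Rsqr_pow2 -Rsqr_abs Rsqr_pow2.
apply: Rnot_lt_le => hlt.
have : (norm u * norm v) * (norm u * norm v) < Rabs (dot u v) * Rabs (dot u v).
  apply: Rmult_le_0_lt_compat => //; nra.
move: h4 h; rewrite /= !Rmult_1_r => h4 h; lra.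
Qed.
Lemma Wcol m (E : nat -> 'I_m -> 'I_m -> bool) t j :
  \big[Rplus/0]_(i < m) Wmat E t i j = 1.
Proof.
rewrite /Wmat.
rewrite (eq_bigr (fun i => if i \in Nout E t j then 1 / INR (deg E t j) else 0)); last first.
  move=> i _; congr (if _ then _ else _).
  by rewrite /Nin /Nout !inE eq_sym.
rewrite -big_mkcond big_const iter_const /deg.
have hpos : (0 < #|Nout E t j|)%N.
  by apply/card_gt0P; exists j; rewrite /Nout !inE eqxx orbT.
have : 0 < INR #|Nout E t j| by apply: lt_0_INR; apply/ltP.
move=> h; field; lra.
Qed.

Lemma W_ge0 m (E : nat -> 'I_m -> 'I_m -> bool) t i j : 0 <= Wmat E t i j.
Proof.
rewrite /Wmat; case: ifP => _; last lra.
apply: Rle_mult_inv_pos; first lra.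
apply: lt_0_INR; apply/ltP; rewrite /deg.
by apply/card_gt0P; exists j; rewrite /Nout !inE eqxx orbT.
Qed.

Lemma W_diag_pos m (E : nat -> 'I_m -> 'I_m -> bool) t i : 0 < Wmat E t i i.
Proof.
rewrite /Wmat /Nin !inE eqxx orbT.
apply: Rlt_mult_inv_pos; first lra.
apply: lt_0_INR; apply/ltP; rewrite /deg.
by apply/card_gt0P; exists i; rewrite /Nout !inE eqxx orbT.
Qed.

Lemma Wmix m (E : nat -> 'I_m -> 'I_m -> bool) t (y : 'I_m -> R) :
  \big[Rplus/0]_(i < m) \big[Rplus/0]_(j < m) (Wmat E t i j * y j)
  = \big[Rplus/0]_(j < m) y j.
Proof.
rewrite exchange_big /=; apply: eq_bigr => j _.
by rewrite sumRZr Wcol Rmult_1_l.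
Qed.

Lemma sq_le_lin x K : 0 <= x -> 0 <= K -> x ^ 2 <= K * x -> x <= K.
Proof. move=> h1 h2 h3; apply: Rnot_lt_le => h; nra. Qed.

Lemma dot_sum_l q m (w : 'I_m -> R) (v : 'I_m -> vec q) (s : vec q) :
  dot (fun r => \big[Rplus/0]_(i < m) (w i * v i r)) s
  = \big[Rplus/0]_(i < m) (w i * dot (v i) s).
Proof.
rewrite /dot /vsum.
rewrite (eq_bigr (fun k => \big[Rplus/0]_(i < m) (w i * (v i k * s k)))); last first.
  move=> k _; rewrite -sumRZr; apply: eq_bigr => i _; ring.
rewrite exchange_big /=; apply: eq_bigr => i _; by rewrite sumRZ.
Qed.

Lemma norm_comb q m (w : 'I_m -> R) (v : 'I_m -> vec q) (D : R) (K : 'I_m -> R) :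
  (forall i, 0 <= w i) -> (forall i, norm (v i) <= K i) -> 0 <= D ->
  \big[Rplus/0]_(i < m) (w i * K i) <= D ->
  norm (fun r => \big[Rplus/0]_(i < m) (w i * v i r)) <= D.
Proof.
move=> hw hv hD hsum.
set s := fun r => _.
apply: sq_le_lin => //; first exact: norm_ge0.
rewrite norm_sq {1}/s dot_sum_l.
apply: Rle_trans (_ : \big[Rplus/0]_(i < m) (w i * K i) * norm s <= _); last first.
  apply: Rmult_le_compat_r => //; exact: norm_ge0.
rewrite -sumRZr; apply: sumR_le => i _.
rewrite Rmult_assoc; apply: Rmult_le_compat_l => //.
have := CS (v i) s; have := hv i; have := norm_ge0 s; have := Rle_abs (dot (v i) s); nra.
Qed.
Lemma abs_both {x y : R} : Rabs x <= y -> - y <= x /\ x <= y.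
Proof. move=> h; split_Rabs; lra. Qed.

Lemma dot_sub_scale n (u w : vec n) c :
  dot (vsub u (vscale c w)) (vsub u (vscale c w)) = dot u u - 2 * c * dot u w + c ^ 2 * dot w w.
Proof. rewrite !dot_subl !dot_subr !dot_scalel !dot_scaler (dot_comm w u); ring. Qed.
Lemma dot_add_scale n (d w : vec n) c :
  dot (vadd d (vscale c w)) (vadd d (vscale c w)) = dot d d + 2 * (c * dot w d) + c * (c * dot w w).
Proof. rewrite dot_addl !dot_addr !dot_scalel !dot_scaler (dot_comm d w); ring. Qed.
Unset Implicit Arguments.
Theorem lemma2
  (m p : nat) (n : 'I_m -> nat)
  (f : forall i, vec (n i) -> R) (X : forall i, vec (n i) -> Prop)
  (A : forall i, mat p (n i)) (b : 'I_m -> vec p)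
  (gamma tau G : 'I_m -> R)
  (E : nat -> 'I_m -> 'I_m -> bool) (Bc : nat)
  (beta : nat -> R) (D : R)
  (theta u lam : 'I_m -> nat -> vec p) (rho : 'I_m -> nat -> R)
  (xs : forall i, nat -> vec (n i))
  (* problem data *)
  (Hm : (0 < m)%N)
  (Hgamma : forall i, 0 < gamma i)
  (* Assumption A1 *)
  (Htau : forall i, 0 < tau i)
  (Hf : forall i, strongly_convex (f i) (tau i))
  (HXne : forall i, exists x0, X i x0)
  (HXconv : forall i, convex_set (X i))
  (HXcomp : forall i, compact_set (X i))
  (HGpos : forall i, 0 < G i)
  (HG : forall i x, X i x -> norm (vsub (matvec (A i) x) (b i)) <= G i)
  (* Assumption A2 *)
  (HA2 : B_strongly_connected E Bc)
  (* stepsizes *)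
  (Hbeta_pos : forall t, 0 < beta t)
  (Hbeta_noninc : forall t, beta t.+1 <= beta t)
  (Hbeta_lim : Un_cv beta 0)
  (* Algorithm DRDGA *)
  (Hrho0 : forall i, rho i 0%N = 1)
  (Hu : forall i t, u i t.+1 = (fun r => \big[Rplus/0]_(j < m) (Wmat E t i j * theta j t r)))
  (Hrho : forall i t, rho i t.+1 = \big[Rplus/0]_(j < m) (Wmat E t i j * rho j t))
  (Hlam : forall i t, lam i t.+1 = vscale (/ rho i t.+1) (u i t.+1))
  (Hxmem : forall i t, X i (xs i t.+1))
  (Hxmin : forall i t y, X i y ->
     Lag_i (f i) (A i) (b i) (gamma i) (xs i t.+1) (lam i t.+1)
     <= Lag_i (f i) (A i) (b i) (gamma i) y (lam i t.+1))
  (Htheta : forall i t, theta i t.+1 =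
     vadd (u i t.+1)
       (vscale (beta t.+1)
          (vsub (vsub (matvec (A i) (xs i t.+1)) (b i)) (vscale (gamma i) (lam i t.+1)))))
  (* dual iterates bounded by D *)
  (HD : forall i t, (0 < t)%N -> norm (lam i t) <= D) :
  let thbar := fun t => vavg (fun i => theta i t) in
  forall (l : vec p) (x : forall i, vec (n i)), (forall i, X i (x i)) ->
  forall t : nat, (0 < t)%N ->
    (norm (vsub (thbar t.+1) l)) ^ 2
    <= (norm (vsub (thbar t) l)) ^ 2
       + 4 * beta t.+1 / INR m *
           \big[Rplus/0]_(j < m) ((G j + gamma j * D) * norm (vsub (lam j t.+1) (thbar t)))
       - beta t.+1 / INR m *
           \big[Rplus/0]_(j < m) (gamma j * (norm (vsub (lam j t.+1) l)) ^ 2)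
       + (beta t.+1) ^ 2 / INR m *
           \big[Rplus/0]_(j < m) ((G j + gamma j * D) ^ 2)
       - 2 * beta t.+1 / INR m *
           (Lag f A b gamma (fun i => xs i t.+1) l - Lag f A b gamma x (thbar t)).
Proof.
intros thbar l x Hx t Ht.
have Hthdef : forall s, thbar s = vavg (fun i => theta i s) by [].
clearbody thbar.
have HmR : 0 < INR m by apply: lt_0_INR; apply/ltP.
have HD0 : 0 <= D.
  have := HD (Ordinal Hm) 1%N erefl; have := norm_ge0 (lam (Ordinal Hm) 1%N); lra.
have Hrho_all : forall s, \big[Rplus/0]_(i < m) rho i s = INR m /\ forall i, 0 < rho i s.
  elim=> [|s [IHs IHp]].
    split; last by move=> i; rewrite Hrho0; lra.
    rewrite (eq_bigr (fun=> 1)); last by move=> i _; rewrite Hrho0.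
    by rewrite big_const_ord iter_const Rmult_1_r.
  split.
    rewrite (eq_bigr (fun i => \big[Rplus/0]_(j < m) (Wmat E s i j * rho j s))); last first.
      by move=> i _; rewrite Hrho.
    by rewrite Wmix.
  move=> i; rewrite Hrho (bigD1 i) //=.
  have := W_diag_pos E s i; have := IHp i.
  have : 0 <= \big[Rplus/0]_(j < m | j != i) (Wmat E s i j * rho j s).
    apply: sumR_ge0 => j _; have := W_ge0 E s i j; have := IHp j; nra.
  move=> h1 h2 h3; apply: Rplus_lt_le_0_compat => //; exact: Rmult_lt_0_compat.
have Hu_lam : forall i r, u i t.+1 r = rho i t.+1 * lam i t.+1 r.
  move=> i r; rewrite Hlam /vscale; have := (Hrho_all t.+1).2 i => h; field; lra.
have Hsumu : forall s r, \big[Rplus/0]_(i < m) u i s.+1 r = \big[Rplus/0]_(j < m) theta j s r.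
  move=> s r; rewrite (eq_bigr (fun i => \big[Rplus/0]_(j < m) (Wmat E s i j * theta j s r))).
    by rewrite Wmix.
  by move=> i _; rewrite Hu.
have Hth : thbar t = fun r => \big[Rplus/0]_(i < m) ((rho i t.+1 * / INR m) * lam i t.+1 r).
  apply: functional_extensionality => r.
  rewrite Hthdef /vavg -Hsumu -sumRZ; apply: eq_bigr => i _; rewrite Hu_lam; ring.
have Hthn : norm (thbar t) <= D.
  rewrite Hth; apply: (@norm_comb _ _ _ _ D (fun _ => D)) => //.
  - move=> i; have := (Hrho_all t.+1).2 i; have := Rinv_0_lt_compat _ HmR; nra.
  - by move=> i; apply: HD.
  - rewrite sumRZr sumRZr (Hrho_all t.+1).1; right; field; lra.
pose g := fun i => vsub (vsub (matvec (A i) (xs i t.+1)) (b i)) (vscale (gamma i) (lam i t.+1)).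
pose S := fun r => \big[Rplus/0]_(i < m) (1 * g i r).
pose K := fun i => G i + gamma i * D.
have Hth1 : thbar t.+1 = vadd (thbar t) (vscale (beta t.+1 / INR m) S).
  apply: functional_extensionality => r.
  rewrite !Hthdef /vavg /vadd /vscale /S.
  rewrite (eq_bigr (fun i => u i t.+1 r + beta t.+1 * g i r)); last first.
    by move=> i _; rewrite Htheta.
  rewrite sumRD sumRZ Hsumu.
  rewrite (@eq_bigr _ _ _ _ _ _ (fun i => 1 * g i r) (fun i => g i r)); last by move=> i _; ring.
  field; lra.
have Hd : vsub (thbar t.+1) l = vadd (vsub (thbar t) l) (vscale (beta t.+1 / INR m) S).
  by rewrite Hth1; apply: functional_extensionality => r; rewrite /vsub /vadd /vscale; ring.
have Hi : forall i, dot (g i) (vsub (thbar t) l) <=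
   2 * (K i * norm (vsub (lam i t.+1) (thbar t)))
   + (Lag_i (f i) (A i) (b i) (gamma i) (x i) (thbar t)
      - Lag_i (f i) (A i) (b i) (gamma i) (xs i t.+1) l)
   - / 2 * (gamma i * norm (vsub (lam i t.+1) l) ^ 2).
  move=> i.
  have hxm := Hxmin i t (x i) (Hx i).
  move: hxm; rewrite /Lag_i /g /K.
  set a := vsub (matvec (A i) (xs i t.+1)) (b i).
  set c := vsub (matvec (A i) (x i)) (b i).
  set lm := lam i t.+1. set th := thbar t.
  have Ha : norm a <= G i by apply: HG; apply: Hxmem.
  have Hc : norm c <= G i by apply: HG; apply: Hx.
  have Hl : norm lm <= D by apply: HD.
  set e := norm (vsub lm th).
  have He : 0 <= e by apply: norm_ge0.
  have Hna := norm_ge0 a. have Hnc := norm_ge0 c.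
  have h1 := abs_both (CS a (vsub lm th)).
  have h2 := abs_both (CS c (vsub lm th)).
  have h3 := abs_both (CS lm (vsub lm th)).
  have h4 := abs_both (CS th (vsub lm th)).
  rewrite -/e in h1 h2 h3 h4.
  have h1' : norm a * e <= G i * e by apply: Rmult_le_compat_r.
  have h2' : norm c * e <= G i * e by apply: Rmult_le_compat_r.
  have h3' : norm lm * e <= D * e by apply: Rmult_le_compat_r.
  have h4' : norm th * e <= D * e by apply: Rmult_le_compat_r.
  have he2 : e ^ 2 <= 2 * D * e.
    rewrite /e norm_sq {1}dot_subl -/e; lra.
  have hg := Hgamma i.
  have he2' : gamma i * e ^ 2 <= gamma i * (2 * D * e) by nra.
  rewrite /e norm_sq -/e in he2'.
  rewrite norm_sq.
  move: h1 h2 he2'.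
  rewrite ?dot_subl ?dot_subr ?dot_scalel ?dot_scaler.
  rewrite ?(dot_comm th lm) ?(dot_comm l lm) ?(dot_comm th a) ?(dot_comm l a) ?(dot_comm th c) ?(dot_comm lm a) ?(dot_comm lm c).
  move=> h1 h2 he2' hxm.
  have hgde : 0 <= gamma i * D * e by apply: Rmult_le_pos => //; apply: Rmult_le_pos; lra.
  lra.
have Hgn : forall i, norm (g i) <= K i.
  move=> i; rewrite /g /K.
  set a := vsub (matvec (A i) (xs i t.+1)) (b i).
  set lm := lam i t.+1.
  have Ha : norm a <= G i by apply: HG; apply: Hxmem.
  have Hl : norm lm <= D by apply: HD.
  have Hna := norm_ge0 a. have Hnl := norm_ge0 lm.
  have hg := Hgamma i.
  have h1 := abs_both (CS a lm).
  have hprod : norm a * norm lm <= G i * D by apply: Rmult_le_compat.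
  have hsq : norm (vsub a (vscale (gamma i) lm)) ^ 2 <= (G i + gamma i * D) ^ 2.
    rewrite norm_sq dot_sub_scale.
    rewrite -!norm_sq.
    have hsa : norm a ^ 2 <= G i ^ 2 by apply: pow_incr.
    have hsl : gamma i ^ 2 * norm lm ^ 2 <= gamma i ^ 2 * D ^ 2.
      apply: Rmult_le_compat_l; first nra. by apply: pow_incr.
    have hgp : gamma i * dot a lm >= - (gamma i * (G i * D)) by nra.
    nra.
  have hK : 0 <= G i + gamma i * D by have := HGpos i; nra.
  have hn := norm_ge0 (vsub a (vscale (gamma i) lm)).
  apply: Rnot_lt_le => hlt.
  have : (G i + gamma i * D) * (G i + gamma i * D) <
         norm (vsub a (vscale (gamma i) lm)) * norm (vsub a (vscale (gamma i) lm)).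
    by apply: Rmult_le_0_lt_compat.
  move: hsq; rewrite /= !Rmult_1_r; lra.
have HK0 : forall i, 0 <= K i by move=> i; rewrite /K; have := HGpos i; have := Hgamma i; nra.
have HSn : norm S <= \big[Rplus/0]_(i < m) K i.
  apply: (@norm_comb _ _ (fun _ => 1) g _ K) => //.
  - by move=> i; lra.
  - by apply: sumR_ge0.
  - right; apply: eq_bigr => i _; ring.
have HSS : dot S S <= INR m * \big[Rplus/0]_(j < m) ((G j + gamma j * D) ^ 2).
  rewrite -norm_sq.
  have h1 : norm S ^ 2 <= (\big[Rplus/0]_(i < m) K i) ^ 2.
    apply: pow_incr; split => //; exact: norm_ge0.
  have h2 := CS2 (K : vec m) (fun _ : 'I_m => 1).
  have e1 : dot (K : vec m) (fun _ : 'I_m => 1) = \big[Rplus/0]_(i < m) K i.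
    by rewrite /dot /vsum; apply: eq_bigr => i _; ring.
  have e2 : dot (fun _ : 'I_m => 1) (fun _ : 'I_m => 1) = INR m.
    rewrite /dot /vsum (eq_bigr (fun _ => 1)); last by move=> i _; ring.
    by rewrite big_const_ord iter_const Rmult_1_r.
  have e3 : dot (K : vec m) K = \big[Rplus/0]_(j < m) ((G j + gamma j * D) ^ 2).
    by rewrite /dot /vsum; apply: eq_bigr => i _; rewrite /K; ring.
  rewrite e1 e2 e3 in h2. lra.
have HT : dot S (vsub (thbar t) l) = \big[Rplus/0]_(i < m) dot (g i) (vsub (thbar t) l).
  rewrite /S dot_sum_l; apply: eq_bigr => i _; ring.
have Hsum : dot S (vsub (thbar t) l) <=
   2 * \big[Rplus/0]_(i < m) (K i * norm (vsub (lam i t.+1) (thbar t)))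
   + (\big[Rplus/0]_(i < m) Lag_i (f i) (A i) (b i) (gamma i) (x i) (thbar t)
      - \big[Rplus/0]_(i < m) Lag_i (f i) (A i) (b i) (gamma i) (xs i t.+1) l)
   - / 2 * \big[Rplus/0]_(i < m) (gamma i * norm (vsub (lam i t.+1) l) ^ 2).
  rewrite HT -sumRZ -sumRB -sumRZ -sumRD -sumRB.
  by apply: sumR_le => i _; apply: Hi.
rewrite Hd !norm_sq dot_add_scale.
rewrite /Lag.
have Hc : 0 <= beta t.+1 / INR m.
  have := Hbeta_pos t.+1; have := Rinv_0_lt_compat _ HmR; rewrite /Rdiv; nra.
have h1 := Rmult_le_compat_l _ _ _ Hc Hsum.
have h2 := Rmult_le_compat_l _ _ _ Hc (Rmult_le_compat_l _ _ _ Hc HSS).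
have e : beta t.+1 / INR m * (beta t.+1 / INR m * (INR m * \big[Rplus/0]_(j < m) ((G j + gamma j * D) ^ 2)))
   = beta t.+1 ^ 2 / INR m * \big[Rplus/0]_(j < m) ((G j + gamma j * D) ^ 2).
  field; lra.
rewrite e in h2.
rewrite /K in h1.
lra.
Qed.
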